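(* Consider a single element $[x_0,x_p]$ with $p\ge1$, Gauss–Lobatto nodes and the matrices $\mathcal{P},\mathcal{Q}_x,\mathcal{D}_x,\mathcal{B}$ as in the context. Let $a\ge 0$ be a constant, let $\varepsilon_k(t)\ge 0$ ($k=0,\dots,p$) be continuous nodal diffusion coefficients with $\mathcal{E}(t)=\mathrm{diag}(\varepsilon_0(t),\dots,\varepsilon_p(t))$, and let $$\mathcal{Q}_{xx}(\varepsilon)=\mathcal{E}\mathcal{B}\mathcal{D}_x-(\sqrt{\mathcal{E}}\mathcal{D}_x)^T\mathcal{P}(\sqrt{\mathcal{E}}\mathcal{D}_x).$$ Let $\mathbf{U}(t)=(\bar u_0,\dots,\bar u_p)^T$ be a $C^1$ solution of the semi-discrete scheme $$\mathcal{P}\frac{d\mathbf{U}}{dt}+a\,\mathcal{Q}_x\mathbf{U}=\mathcal{Q}_{xx}(\varepsilon)\mathbf{U}+\sigma_0\,e_0\big[a\bar u_0-\varepsilon_0(\mathcal{D}_x\mathbf{U})_0-g_0\big]+\sigma_p\,e_p\big[-\varepsilon_p(\mathcal{D}_x\mathbf{U})_p-g_p\big],$$ where $e_0,e_p$ are the first and last standard unit vectors in $\mathbb{R}^{p+1}$. If $\sigma_0=-1$, $\sigma_p=1$ and the boundary data vanish ($g_0=g_p=0$), then for all $t\ge0$ $$\mathbf{U}(t)^T\mathcal{P}\mathbf{U}(t)+2\int_0^t\big(\sqrt{\mathcal{E}}\mathcal{D}_x\mathbf{U}\big)^T\mathcal{P}\big(\sqrt{\mathcal{E}}\mathcal{D}_x\mathbf{U}\big)\,ds\le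 \mathbf{U}(0)^T\mathcal{P}\mathbf{U}(0).$$
   Context: Gauss–Lobatto nodes $x_0<\dots<x_p$ (including both endpoints) with positive weights $w_0,\dots,w_p$; $\ell_j$ the degree-$p$ Lagrange basis polynomials on these nodes. $\mathcal{P}=\mathrm{diag}(w_0,\dots,w_p)$; $(\mathcal{Q}_x)_{ij}=\int_{x_0}^{x_p}\ell_i\ell_j'\,dx$; $\mathcal{D}_x=\mathcal{P}^{-1}\mathcal{Q}_x$, so $(\mathcal{D}_x\mathbf{U})_k$ is the derivative at $x_k$ of the interpolant $\sum_j\bar u_j\ell_j$; $\mathcal{B}=\mathrm{diag}(-1,0,\dots,0,1)$; $\sqrt{\mathcal{E}}=\mathrm{diag}(\sqrt{\varepsilon_0},\dots,\sqrt{\varepsilon_p})$. This is the discretization of $u_t+au_x=(\varepsilon u_x)_x$ with weakly imposed boundary conditions $au-\varepsilon u_x=g_0$ at the left end and $-\varepsilon u_x=g_p$ at the right end; $\sigma_0,\sigma_p$ are penalty parameters. *)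

(* Defs.v *)
From HB Require Import structures.
From mathcomp Require Import all_boot all_order all_algebra.
From mathcomp Require Import all_classical all_reals all_analysis.
Set Implicit Arguments. Unset Strict Implicit. Unset Printing Implicit Defensive.
Import Order.TTheory GRing.Theory Num.Theory.
Import numFieldNormedType.Exports.
Local Open Scope classical_set_scope.
Local Open Scope ring_scope.

Section SBP.
Variable R : realType.
Variable p : nat.

(* integral over [a,b] (Lebesgue = Riemann for the continuous integrands used) *)
Definition int_ab (a b : R) (f : R -> R) : R :=
  Rintegral (@lebesgue_measure R) `[a, b] f.

Definition lagrange (x : 'I_p.+1 -> R) (j : 'I_p.+1) : {poly R} :=
  \prod_(m < p.+1 | m != j) (('X - (x m)%:P) * ((x j - x m)^-1)%:P).

(* Gauss--Lobatto rule on [x_0, x_p]: strictly increasing nodes, both endpoints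
   included (x_0 and x_p are the interval ends), positive weights, and exact for
   all polynomials of degree <= 2p-1 (i.e. size <= 2p). *)
Definition gauss_lobatto (x w : 'I_p.+1 -> R) : Prop :=
  [/\ (forall i j : 'I_p.+1, (i < j)%N -> x i < x j),
      (forall j, 0 < w j) &
      (forall q : {poly R}, (size q <= 2 * p)%N ->
          \sum_(j < p.+1) w j * q.[x j] = int_ab (x ord0) (x ord_max) (fun y => q.[y]))].

Definition Pmat (w : 'I_p.+1 -> R) : 'M[R]_p.+1 := diag_mx (\row_j w j).

Definition Qx (x : 'I_p.+1 -> R) : 'M[R]_p.+1 :=
  \matrix_(i, j) int_ab (x ord0) (x ord_max)
                   (fun y => (lagrange x i * (lagrange x j)^`()).[y]).

Definition Dx (x w : 'I_p.+1 -> R) : 'M[R]_p.+1 := invmx (Pmat w) *m Qx x.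

Definition Bmat : 'M[R]_p.+1 :=
  diag_mx (\row_i (if i == ord_max then 1 else if i == ord0 then -1 else 0)).

Definition Emat (eps : 'I_p.+1 -> R -> R) (t : R) : 'M[R]_p.+1 :=
  diag_mx (\row_k eps k t).

Definition sqrtEmat (eps : 'I_p.+1 -> R -> R) (t : R) : 'M[R]_p.+1 :=
  diag_mx (\row_k Num.sqrt (eps k t)).

Definition Qxx (x w : 'I_p.+1 -> R) (eps : 'I_p.+1 -> R -> R) (t : R) : 'M[R]_p.+1 :=
  Emat eps t *m Bmat *m Dx x w
  - (sqrtEmat eps t *m Dx x w)^T *m Pmat w *m (sqrtEmat eps t *m Dx x w).

Definition dUdt (U : R -> 'cV[R]_p.+1) (t : R) : 'cV[R]_p.+1 :=
  \col_k derive1 (fun s => U s k 0) t.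

Definition scheme (x w : 'I_p.+1 -> R) (a : R) (eps : 'I_p.+1 -> R -> R)
    (sigma0 sigmap g0 gp : R) (U : R -> 'cV[R]_p.+1) (t : R) : Prop :=
  Pmat w *m dUdt U t + a *: (Qx x *m U t) =
    Qxx x w eps t *m U t
    + (sigma0 * (a * U t ord0 0 - eps ord0 t * (Dx x w *m U t) ord0 0 - g0))
        *: delta_mx ord0 0
    + (sigmap * (- eps ord_max t * (Dx x w *m U t) ord_max 0 - gp))
        *: delta_mx ord_max 0.

Definition energy (w : 'I_p.+1 -> R) (V : 'cV[R]_p.+1) : R :=
  (V^T *m Pmat w *m V) 0 0.

End SBP.

(* Main.v *)
Require Import Defs.
From HB Require Import structures.
From mathcomp Require Import all_boot all_order all_algebra.
From mathcomp Require Import all_classical all_reals all_analysis.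
From mathcomp Require Import zify ring.
Import Order.TTheory GRing.Theory Num.Theory.
Import numFieldNormedType.Exports.
Local Open Scope classical_set_scope.
Local Open Scope ring_scope.
Set Implicit Arguments. Unset Strict Implicit. Unset Printing Implicit Defensive.

Section A.
Variable R : realType.

Lemma size_prod_le2 (I : Type) (r : seq I) (P : pred I) (F : I -> {poly R}) :
  (forall i, P i -> (size (F i) <= 2)%N) ->
  (size (\prod_(i <- r | P i) F i)%R <= (count P r).+1)%N.
Proof.
move=> HF; elim: r => [|a r IH]; first by rewrite big_nil size_poly1.
rewrite big_cons /=; case: ifP => Pa /=; last by rewrite add0n.
apply: leq_trans (size_mul_leq _ _) _.
have := HF a Pa; move: IH; set s1 := size _; set s2 := size _; lia.
Qed.

Lemma size_deriv_le (q : {poly R}) : (size q^`() <= (size q).-1)%N.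
Proof.
have [->|q0] := eqVneq q 0; first by rewrite deriv0 size_poly0.
by have := lt_size_deriv q0; case: (size q) => //.
Qed.

Variable p : nat.

Lemma size_lagrange (x : 'I_p.+1 -> R) j : (size (Defs.lagrange x j) <= p.+1)%N.
Proof.
rewrite /Defs.lagrange; apply: leq_trans (size_prod_le2 _ _) _.
- move=> m _; apply: leq_trans (size_mul_leq _ _) _.
  rewrite size_XsubC; have := size_polyC_leq1 (x j - x m)^-1.
  by case: (size _) => [|[|]].
- have -> : count (fun m => m != j) (index_enum 'I_p.+1) = p; last by [].
  by rewrite -size_filter deprecated_filter_index_enum -cardE cardC1 card_ord.
Qed.

Lemma lagrange_node (x : 'I_p.+1 -> R) (hx : injective x) i j :
  (Defs.lagrange x j).[x i] = (i == j)%:R.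
Proof.
rewrite /Defs.lagrange horner_prod; case: (eqVneq i j) => [->|nij].
- apply: big1 => m mj; rewrite hornerM hornerC hornerXsubC mulfV //.
  by rewrite subr_eq0; apply/eqP => /hx /eqP; rewrite eq_sym (negbTE mj).
- by rewrite (bigD1 i) //= hornerM hornerXsubC subrr !mul0r.
Qed.

Lemma poly_ftc (q : {poly R}) (a b : R) : a < b ->
  int_ab a b (fun y => (q^`()).[y]) = q.[b] - q.[a].
Proof.
move=> ab; rewrite /int_ab /Rintegral.
rewrite (@continuous_FTC2 R (horner q^`()) (horner q) a b ab) //.
- apply: continuous_subspaceT; exact: continuous_horner.
- split.
  + by move=> y _; exact: derivable_horner.
  + apply: cvg_at_right_filter; exact: continuous_horner.
  + apply: cvg_at_left_filter; exact: continuous_horner.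
- by move=> y _; rewrite -derivE.
Qed.

Lemma sum_delta (k : 'I_p.+1) (f : 'I_p.+1 -> R) :
  \sum_(j < p.+1) (k == j)%:R * f j = f k.
Proof.
rewrite (bigD1 k) //= eqxx mul1r big1 ?addr0 // => j.
by rewrite eq_sym => /negbTE ->; rewrite mul0r.
Qed.


Lemma GL_inj (x w : 'I_p.+1 -> R) : gauss_lobatto x w -> injective x.
Proof.
case=> hx _ _ i j eij; apply: val_inj; apply/eqP; case: (ltngtP i j) => // h.
- by have := hx _ _ h; rewrite eij ltxx.
- by have := hx _ _ h; rewrite eij ltxx.
Qed.

Lemma Qx_sym (x w : 'I_p.+1 -> R) (hp : (1 <= p)%N) : gauss_lobatto x w ->
  forall i j, Qx x i j + Qx x j i =
    (ord_max == i)%:R * (ord_max == j)%:R - (ord0 == i)%:R * (ord0 == j)%:R.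
Proof.
move=> hGL; have hinj := GL_inj hGL; case: hGL => hx hw hex i j.
have sz : forall a b : 'I_p.+1,
    (size (Defs.lagrange x a * (Defs.lagrange x b)^`())%R <= 2 * p)%N.
  move=> a b; apply: leq_trans (size_mul_leq _ _) _.
  have := size_lagrange x a; have := size_deriv_le (Defs.lagrange x b).
  have := size_lagrange x b; lia.
rewrite !mxE -(hex _ (sz i j)) -(hex _ (sz j i)) -big_split /=.
have szd : (size (Defs.lagrange x i * Defs.lagrange x j)%R^`() <= 2 * p)%N.
  apply: leq_trans (size_deriv_le _) _.
  have := size_mul_leq (Defs.lagrange x i) (Defs.lagrange x j).
  have := size_lagrange x i; have := size_lagrange x j; lia.
have -> : \sum_(k < p.+1) (w k * (Defs.lagrange x i * (Defs.lagrange x j)^`()).[x k]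
     + w k * (Defs.lagrange x j * (Defs.lagrange x i)^`()).[x k])
   = \sum_(k < p.+1) w k * ((Defs.lagrange x i * Defs.lagrange x j)^`()).[x k].
  apply: eq_bigr => k _; rewrite -mulrDr derivM !hornerD !hornerM.
  congr (_ * _); rewrite addrC; congr (_ + _); exact: mulrC.
rewrite hex // poly_ftc; last by apply: hx; rewrite /=; lia.
by rewrite !hornerM !lagrange_node.
Qed.

Lemma Qx_quad (x w : 'I_p.+1 -> R) (hp : (1 <= p)%N) : gauss_lobatto x w ->
  forall V : 'cV[R]_p.+1,
  (V^T *m Qx x *m V) 0 0 = (V ord_max 0 ^+ 2 - V ord0 0 ^+ 2) / 2.
Proof.
move=> hGL V.
set S := (V^T *m Qx x *m V) 0 0.
have eS : S = \sum_(i < p.+1) \sum_(j < p.+1) V i 0 * Qx x i j * V j 0.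
  rewrite /S mxE exchange_big /=; apply: eq_bigr => j _.
  rewrite mxE big_distrl /=; apply: eq_bigr => i _; by rewrite mxE.
have eS' : S = \sum_(i < p.+1) \sum_(j < p.+1) V i 0 * Qx x j i * V j 0.
  rewrite eS exchange_big /=; apply: eq_bigr => i _; apply: eq_bigr => j _.
  by rewrite mulrC [V j 0 * _]mulrC mulrA.
have h2 : S + S = V ord_max 0 ^+ 2 - V ord0 0 ^+ 2.
  have e : forall i j, V i 0 * Qx x i j * V j 0 + V i 0 * Qx x j i * V j 0
     = ((ord_max == i)%:R * V i 0) * ((ord_max == j)%:R * V j 0)
       - ((ord0 == i)%:R * V i 0) * ((ord0 == j)%:R * V j 0).
    move=> i j; rewrite -mulrDl -mulrDr (Qx_sym hp hGL); ring.
  rewrite {1}eS eS' -big_split /=.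
  under eq_bigr => i _ do rewrite -big_split /=.
  under eq_bigr => i _ do under eq_bigr => j _ do rewrite e.
  under eq_bigr => i _ do rewrite sumrB -!mulr_sumr !sum_delta.
  by rewrite sumrB -!mulr_suml !sum_delta !expr2.
by rewrite -h2; field.
Qed.


Lemma energyE (w : 'I_p.+1 -> R) (V : 'cV[R]_p.+1) :
  energy w V = \sum_(k < p.+1) w k * V k 0 ^+ 2.
Proof.
rewrite /energy /Pmat mul_mx_diag !mxE; apply: eq_bigr => k _.
by rewrite !mxE; ring.
Qed.

Lemma quad_diag (u y : 'cV[R]_p.+1) (d : 'I_p.+1 -> R) :
  (u^T *m (diag_mx (\row_k d k) *m y)) 0 0 = \sum_(k < p.+1) u k 0 * (d k * y k 0).
Proof.
rewrite (mul_diag_mx (\row_k d k) y) !mxE; apply: eq_bigr => k _; by rewrite !mxE.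
Qed.

Lemma quad_delta (u : 'cV[R]_p.+1) (k : 'I_p.+1) :
  (u^T *m delta_mx k (0 : 'I_1)) 0 0 = u k 0.
Proof. by rewrite -colE !mxE. Qed.

Lemma sum_B (hp : (1 <= p)%N) (f : 'I_p.+1 -> R) :
  \sum_(k < p.+1) (if k == ord_max then 1 else if k == ord0 then -1 else 0) * f k
  = f ord_max - f ord0.
Proof.
have n0 : (ord0 : 'I_p.+1) != ord_max.
  by apply/eqP => /(congr1 val) /=; lia.
rewrite (bigD1 ord_max) //= eqxx mul1r (bigD1 ord0) /=; last exact: n0.
rewrite ifN //.
rewrite big1 ?addr0 ?mulN1r // => k /andP[k1 k2].
by rewrite (negbTE k1) (negbTE k2) mul0r.
Qed.

Lemma entD m n (A B : 'M[R]_(m, n)) i j : (A + B) i j = A i j + B i j.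
Proof. by rewrite mxE. Qed.
Lemma entB m n (A B : 'M[R]_(m, n)) i j : (A - B) i j = A i j - B i j.
Proof. by rewrite !mxE. Qed.
Lemma entZ m n c (A : 'M[R]_(m, n)) i j : (c *: A) i j = c * A i j.
Proof. by rewrite mxE. Qed.

Lemma quad_EB (hp : (1 <= p)%N) (e : 'I_p.+1 -> R) (M : 'M[R]_p.+1) (u : 'cV[R]_p.+1) :
  (u^T *m (diag_mx (\row_k e k) *m Bmat R p *m M *m u)) 0 0 =
  u ord_max 0 * (e ord_max * (M *m u) ord_max 0) - u ord0 0 * (e ord0 * (M *m u) ord0 0).
Proof.
rewrite /Bmat -!mulmxA quad_diag.
under eq_bigr => k _ do rewrite mul_diag_mx mxE mxE.
have := sum_B hp (fun k => u k 0 * (e k * (M *m u) k 0)); rewrite /= => <-.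
by apply: eq_bigr => k _; ring.
Qed.

Lemma pointwise (hp : (1 <= p)%N) (x w : 'I_p.+1 -> R) (hGL : gauss_lobatto x w)
  (a : R) (eps : 'I_p.+1 -> R -> R) (U : R -> 'cV[R]_p.+1) t :
  scheme x w a eps (-1) 1 0 0 U t ->
  \sum_(k < p.+1) w k * (U t k 0 * dUdt U t k 0) =
  - energy w (sqrtEmat eps t *m Dx x w *m U t)
  - a / 2 * (U t ord0 0 ^+ 2 + U t ord_max 0 ^+ 2).
Proof.
rewrite /scheme => /(congr1 (fun M => ((U t)^T *m M) 0 0)).
set u := U t; set u' := dUdt U t; set D := Dx x w; set S := sqrtEmat eps t.
rewrite mulmxDr -scalemxAr mxE [in X in X + _ = _]/Pmat quad_diag mxE mulmxA.
rewrite (Qx_quad hp hGL).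
rewrite !mulmxDr -!scalemxAr !entD !entZ !quad_delta.
rewrite /Qxx mulmxBl mulmxBr entB.
have -> : (u^T *m ((S *m D)^T *m Pmat w *m (S *m D) *m u)) 0 0
    = energy w (S *m D *m u).
  by rewrite /energy !trmx_mul !mulmxA.
have -> : (u^T *m (Emat eps t *m Bmat R p *m D *m u)) 0 0
    = u ord_max 0 * (eps ord_max t * (D *m u) ord_max 0)
      - u ord0 0 * (eps ord0 t * (D *m u) ord0 0).
  exact: quad_EB.
rewrite /u' /u => H.
set Sm := \sum_(k < p.+1) _.
have -> : Sm = (U t ord_max 0 * (eps ord_max t * (D *m U t) ord_max 0) -
        U t ord0 0 * (eps ord0 t * (D *m U t) ord0 0) -
        energy w (S *m D *m U t) +
        -1 * (a * U t ord0 0 - eps ord0 t * (D *m U t) ord0 0 - 0) * U t ord0 0 +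
        1 * (- eps ord_max t * (D *m U t) ord_max 0 - 0) * U t ord_max 0)
        - a * ((U t ord_max 0 ^+ 2 - U t ord0 0 ^+ 2) / 2).
  rewrite -H /Sm addrK; apply: eq_bigr => k _; ring.
by field.
Qed.


End A.

Section C.
Variable R : realType.

Definition Wc (A : set R) (g : R -> R) :=
  forall s, A s -> g @ within A (nbhs s) --> g s.

Lemma Wc_cont A g : Wc A g -> {within A, continuous g}.
Proof. by move=> H; apply/subspace_continuousP. Qed.

Lemma WcD A f g : Wc A f -> Wc A g -> Wc A (fun r => f r + g r).
Proof. by move=> hf hg s As; apply: cvgD; [exact: hf|exact: hg]. Qed.

Lemma WcM A f g : Wc A f -> Wc A g -> Wc A (fun r => f r * g r).
Proof. by move=> hf hg s As; apply: cvgM; [exact: hf|exact: hg]. Qed.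

Lemma Wc_cst A c : Wc A (fun _ => c).
Proof. by move=> s As; exact: cvg_cst. Qed.

Lemma Wc_sum A n (F : 'I_n -> R -> R) :
  (forall k, Wc A (F k)) -> Wc A (fun r => \sum_(k < n) F k r).
Proof.
move=> HF; rewrite -fct_sumE.
elim/big_ind: _ => //.
- by move=> s As; exact: cvg_cst.
- move=> f g hf hg; exact: WcD.
Qed.

Lemma Wc_pt A g : (forall s, A s -> {for s, continuous g}) -> Wc A g.
Proof. by move=> H s As; apply: cvg_within_filter; exact: H. Qed.

Lemma Wc_sub A B g : A `<=` B -> {within B, continuous g} -> Wc A g.
Proof.
move=> AB hg; apply/subspace_continuousP; exact: continuous_subspaceW hg.
Qed.

End C.

Unset Implicit Arguments.

Theorem proposition2 (R : realType) (p : nat) (hp : (1 <= p)%N)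
  (x w : 'I_p.+1 -> R) (hGL : gauss_lobatto x w)
  (a : R) (ha : 0 <= a)
  (eps : 'I_p.+1 -> R -> R)
  (heps_nn : forall k t, 0 <= t -> 0 <= eps k t)
  (heps_cont : forall k, {within `[0, +oo[, continuous (eps k)})
  (sigma0 sigmap g0 gp : R)
  (U : R -> 'cV[R]_p.+1)
  (hU_der : forall k t, 0 <= t -> derivable (fun s => U s k 0) t 1)
  (hU_C1 : forall k, {within `[0, +oo[, continuous (fun t => derive1 (fun s => U s k 0) t)})
  (hscheme : forall t, 0 <= t -> scheme x w a eps sigma0 sigmap g0 gp U t)
  (hs0 : sigma0 = -1) (hsp : sigmap = 1) (hg0 : g0 = 0) (hgp : gp = 0) :
  forall t, 0 <= t ->
    energy w (U t)
    + 2 * int_ab 0 t (fun s => energy w (sqrtEmat eps s *m Dx x w *m U s))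
    <= energy w (U 0).
Proof.
subst sigma0 sigmap g0 gp.
move=> t t0.
pose du k r := derive1 (fun s => U s k 0) r.
pose E r := energy w (U r).
pose f r := 2 * \sum_(k < p.+1) w k * (U r k 0 * du k r).
pose h r := U r ord0 0 ^+ 2 + U r ord_max 0 ^+ 2.
pose G r := energy w (sqrtEmat eps r *m Dx x w *m U r).
have hpt : forall r, 0 <= r -> f r = -2 * G r - a * h r.
  move=> r r0; have := pointwise hp hGL (hscheme r r0).
  have -> : \sum_(k < p.+1) w k * (U r k 0 * dUdt U r k 0)
          = \sum_(k < p.+1) w k * (U r k 0 * du k r).
    by apply: eq_bigr => k _; rewrite /dUdt mxE.
  by rewrite /f /G /h => ->; field.
have hder : forall r : R, 0 <= r -> is_derive r (1 : R) E (f r).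
  move=> r r0.
  have hk : forall k, is_derive r (1 : R) (fun s : R => U s k 0) (du k r).
    by move=> k; rewrite /du derive1E; apply: derivableP; exact: hU_der.
  have H := @is_derive_sum R R R p.+1 (fun k s => w k * (U s k 0 * U s k 0)) r 1
     (fun k => w k *: (U r k 0 *: du k r + U r k 0 *: du k r))
     (fun k => is_deriveZ (w k) (is_deriveM (hk k) (hk k))).
  have eE : \sum_(k < p.+1) (fun s => w k * (U s k 0 * U s k 0)) = E.
    rewrite fct_sumE; apply/funext => s; rewrite /E energyE.
    by apply: eq_bigr => k _; rewrite expr2.
  rewrite eE in H; apply: (is_derive_eq H).
  rewrite /f mulr_sumr; apply: eq_bigr => k _.
  rewrite /GRing.scale /=; ring.
have [->|tn0] := eqVneq t 0.
  by rewrite /int_ab set_itv1 Rintegral_set1 mulr0 addr0.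
have tpos : 0 < t by rewrite lt_neqAle eq_sym tn0 t0.
have sub0 : `[0, t] `<=` `[0, +oo[.
  by move=> s; rewrite /= !in_itv /= => /andP[-> _].
have Wu : forall k, Wc `[0, t] (fun r => U r k 0).
  move=> k; apply: Wc_pt => s; rewrite /= in_itv /= => /andP[s0 _].
  by apply: differentiable_continuous; apply/derivable1_diffP; exact: hU_der.
have Wdu : forall k, Wc `[0, t] (du k).
  by move=> k; apply: (Wc_sub sub0); exact: hU_C1.
have Wf : Wc `[0, t] f.
  apply: WcM; first exact: Wc_cst.
  apply: Wc_sum => k; apply: WcM; first exact: Wc_cst.
  by apply: WcM; [exact: Wu|exact: Wdu].
have Wh : Wc `[0, t] h.
  rewrite /h; apply: WcD; rewrite /GRing.exp /=; apply: WcM; exact: Wu.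
have Wf' : Wc `[0, t] (fun r => (-1/2) * f r) by apply: WcM; [exact: Wc_cst|].
have Wh' : Wc `[0, t] (fun r => (- a/2) * h r) by apply: WcM; [exact: Wc_cst|].
have cpt := @segment_compact R 0 t.
have If := continuous_compact_integrable cpt (Wc_cont Wf).
have Ih := continuous_compact_integrable cpt (Wc_cont Wh).
have If' := continuous_compact_integrable cpt (Wc_cont Wf').
have Ih' := continuous_compact_integrable cpt (Wc_cont Wh').
have ftc : int_ab 0 t f = E t - E 0.
  rewrite /int_ab /Rintegral (@continuous_FTC2 R f E 0 t tpos (Wc_cont Wf)) //.
  - split.
    + move=> r; rewrite in_itv /= => /andP[r0 _].
      by have [] := hder r (ltW r0).
    + apply: cvg_at_right_filter; apply: differentiable_continuous.
      by apply/derivable1_diffP; have [] := hder 0 (lexx 0).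
    + apply: cvg_at_left_filter; apply: differentiable_continuous.
      by apply/derivable1_diffP; have [] := hder t t0.
  - move=> r; rewrite in_itv /= => /andP[r0 _]; rewrite derive1E.
    exact: (@derive_val _ _ _ _ _ _ _ (hder r (ltW r0))).
have eG : int_ab 0 t G = int_ab 0 t (fun r => (-1/2) * f r + (- a/2) * h r).
  apply: eq_Rintegral => r; rewrite inE /= in_itv /= => /andP[r0 _].
  by rewrite hpt // /G; field.
have hI : 0 <= int_ab 0 t h.
  apply: Rintegral_ge0 => r _; apply: addr_ge0; exact: sqr_ge0.
rewrite -/(E t) -/(E 0) -/G eG /int_ab RintegralD //.
have -> : \int[lebesgue_measure]_(x0 in `[0, t]) (-1 / 2 * f x0) = -1/2 * int_ab 0 t f.
  by rewrite RintegralZl.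
have -> : \int[lebesgue_measure]_(x0 in `[0, t]) (- a / 2 * h x0) = - a/2 * int_ab 0 t h.
  by rewrite RintegralZl.
rewrite ftc.
have -> : E t + 2 * (-1 / 2 * (E t - E 0) + - a / 2 * int_ab 0 t h)
        = E 0 - a * int_ab 0 t h by field.
rewrite lerBlDr lerDl; exact: mulr_ge0.
Qed.
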